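(* Let $(e_n)$ be a uniformly quasi-greedy basic sequence in a Banach lattice $X$, with span $E$, quasi-greedy constant $C_{qg}$ and uniform quasi-greedy constant $C^\vee_{qg}$. Then for every $x\in E$ and every ordered set $A=\{n_1,\dots,n_m\}\subseteq\mathrm{supp}(x)$, $$\|P^\vee_A(x)\|\le 8C_{qg}^2C^\vee_{qg}\,\frac{\max\{|e_n^*(x)|:n\in A\}}{\min\{|e_n^*(x)|:n\in A\}}\,\|x\|.$$
   Context: $(e_n)$ is a semi-normalized basic sequence with biorthogonal functionals $e_n^*$, $\mathrm{supp}(x)=\{n:e_n^*(x)\ne0\}$. For $x\in E$, the natural greedy ordering $\rho$ lists indices by non-increasing $|e_n^*(x)|$ (ties broken by increasing index, range containing the support); $\mathcal{G}_m(x)=\sum_{n=1}^m e^*_{\rho(n)}(x)e_{\rho(n)}$, $\mathcal{G}^\vee_m(x)=\bigvee_{n\le m}|\mathcal{G}_n(x)|$. $C_{qg}=\sup_m\sup_{\|x\|=1}\|\mathcal{G}_m(x)\|$ and $C^\vee_{qg}=\sup_m\sup_{\|x\|=1}\|\mathcal{G}^\vee_m(x)\|$; the sequence is uniformly quasi-greedy if $C^\vee_{qg}<\infty$ (which implies $C_{qg}<\infty$). For an ordered finite set $A=\{n_1,\dots,n_m\}\subseteq\mathbb{N}$ (the order being the listed one), $P^\vee_A(x)=\bigvee_{i=1}^m\big|\sum_{k=1}^i e^*_{n_k}(x)e_{n_k}\big|$. *)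

(* Defs.v *)
From HB Require Import structures.
From mathcomp Require Import all_boot all_order all_algebra.
From mathcomp Require Import all_classical all_reals all_analysis.
Set Implicit Arguments. Unset Strict Implicit. Unset Printing Implicit Defensive.
Import Order.TTheory GRing.Theory Num.Theory.
Import numFieldNormedType.Exports.
Local Open Scope classical_set_scope.
Local Open Scope ring_scope.

Section BanachLattice.
Variables (R : realType) (X : completeNormedModType R).

Definition is_vector_lattice (le : X -> X -> Prop) (join : X -> X -> X) : Prop :=
  [/\ (forall x, le x x) /\
      (forall x y, le x y -> le y x -> x = y) /\
      (forall x y z, le x y -> le y z -> le x z),
      (forall x y z, le x y -> le (x + z) (y + z)),
      (forall (a : R) x y, 0 <= a -> le x y -> le (a *: x) (a *: y)) &
      (forall x y, [/\ le x (join x y), le y (join x y) &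
                       forall z, le x z -> le y z -> le (join x y) z])].

Definition labs (join : X -> X -> X) (x : X) : X := join x (- x).

Definition is_banach_lattice (le : X -> X -> Prop) (join : X -> X -> X) : Prop :=
  is_vector_lattice le join /\
  (forall x y, le (labs join x) (labs join y) -> `|x| <= `|y|).

Fixpoint supn (join : X -> X -> X) (f : nat -> X) (k : nat) : X :=
  match k with
  | 0 => f 0%N
  | k'.+1 => join (supn join f k') (f k)
  end.

Definition lspan (e : nat -> X) : set X :=
  [set x | exists (N : nat) (c : nat -> R), x = \sum_(i < N) c i *: e i].
Definition clspan (e : nat -> X) : set X := closure (lspan e).

Definition semi_normalized (e : nat -> X) : Prop :=
  exists c C : R, 0 < c /\ forall n, c <= `|e n| <= C.

(* (e_n) is a basic sequence (a Schauder basis of its closed span E) with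
   biorthogonal (coefficient) functionals estar: every x in E has the unique
   expansion x = sum_n estar n x e_n. *)
Definition basic_with_functionals (e : nat -> X) (estar : nat -> X -> R) : Prop :=
  forall x, clspan e x ->
    ((fun N => \sum_(n < N) estar n x *: e n) @ \oo --> x) /\
    (forall a : nat -> R,
        (fun N => \sum_(n < N) a n *: e n) @ \oo --> x -> forall n, a n = estar n x).

Definition supp (estar : nat -> X -> R) (x : X) : set nat :=
  [set n | estar n x != 0].

Definition greedy_lt (estar : nat -> X -> R) (x : X) (n n' : nat) : Prop :=
  `|estar n x| > `|estar n' x| \/ (`|estar n x| = `|estar n' x| /\ (n < n')%N).

Definition natural_greedy_ordering (estar : nat -> X -> R) (x : X)
    (rho : nat -> nat) : Prop :=
  [/\ injective rho,
      (forall i j, (i < j)%N -> greedy_lt estar x (rho i) (rho j)) &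
      (forall n, estar n x != 0 -> exists k, rho k = n)].

Definition greedy_sum (e : nat -> X) (estar : nat -> X -> R) (x : X)
    (rho : nat -> nat) (m : nat) : X :=
  \sum_(k < m) estar (rho k) x *: e (rho k).

(* G^vee_m(x) = \/_{n=1}^m |G_n(x)|, for m >= 1 *)
Definition greedy_vee (join : X -> X -> X) (e : nat -> X) (estar : nat -> X -> R)
    (x : X) (rho : nat -> nat) (m : nat) : X :=
  supn join (fun k => labs join (greedy_sum e estar x rho k.+1)) m.-1.

Definition proj_vee (join : X -> X -> X) (e : nat -> X) (estar : nat -> X -> R)
    (A : seq nat) (x : X) : X :=
  supn join (fun i => labs join
     (\sum_(k < i.+1) estar (nth 0%N A k) x *: e (nth 0%N A k))) (size A).-1.

Definition coef_max (estar : nat -> X -> R) (A : seq nat) (x : X) : R :=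
  \big[Num.max/`|estar (head 0%N A) x|]_(n <- A) `|estar n x|.
Definition coef_min (estar : nat -> X -> R) (A : seq nat) (x : X) : R :=
  \big[Num.min/`|estar (head 0%N A) x|]_(n <- A) `|estar n x|.

End BanachLattice.

(* Main.v *)
Require Import Defs.
From HB Require Import structures.
From mathcomp Require Import all_boot all_order all_algebra.
From mathcomp Require Import all_classical all_reals all_analysis.
From mathcomp Require Import ring lra zify.
Import Order.TTheory GRing.Theory Num.Theory.
Import numFieldNormedType.Exports.
Local Open Scope classical_set_scope.
Local Open Scope ring_scope.
Set Implicit Arguments. Unset Strict Implicit. Unset Printing Implicit Defensive.
Section Lat.
Variables (R : realType) (X : completeNormedModType R).
Variables (le : X -> X -> Prop) (join : X -> X -> X).
Hypothesis HL : is_vector_lattice le join.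

Lemma le_refl' x : le x x. Proof. by case: HL => [[h _] _ _ _]; apply: h. Qed.
Lemma le_anti x y : le x y -> le y x -> x = y. Proof. by case: HL => [[_ [h _]] _ _ _]; apply: h. Qed.
Lemma le_tr x y z : le x y -> le y z -> le x z. Proof. by case: HL => [[_ [_ h]] _ _ _]; apply: h. Qed.
Lemma le_addr x y z : le x y -> le (x + z) (y + z). Proof. by case: HL => _ h _ _; apply: h. Qed.
Lemma le_scale (a : R) x y : 0 <= a -> le x y -> le (a *: x) (a *: y). Proof. by case: HL => _ _ h _; apply: h. Qed.
Lemma le_joinl x y : le x (join x y). Proof. by case: HL => _ _ _ /(_ x y) []. Qed.
Lemma le_joinr x y : le y (join x y). Proof. by case: HL => _ _ _ /(_ x y) []. Qed.
Lemma join_lub x y z : le x z -> le y z -> le (join x y) z.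
Proof. by case: HL => _ _ _ /(_ x y) [] _ _; apply. Qed.

Lemma le_add x y x' y' : le x y -> le x' y' -> le (x + x') (y + y').
Proof.
move=> h1 h2; apply: (le_tr (le_addr x' h1)).
by rewrite (addrC y x') (addrC y y'); apply: le_addr.
Qed.

Lemma le_sub0 x y : le x y -> le 0 (y - x).
Proof. by move=> h; have := le_addr (- x) h; rewrite subrr. Qed.

Lemma le_0sub x y : le 0 (y - x) -> le x y.
Proof. by move=> h; have := le_addr x h; rewrite add0r subrK. Qed.

Lemma le_opp x y : le x y -> le (- y) (- x).
Proof.
move=> h; have := le_addr (- x - y) h.
by rewrite addrA subrr add0r addrCA subrr addr0.
Qed.

Lemma labs_ge x : le x (labs join x). Proof. exact: le_joinl. Qed.
Lemma labs_geN x : le (- x) (labs join x). Proof. exact: le_joinr. Qed.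

Lemma labs_ge0 x : le 0 (labs join x).
Proof.
have h := le_add (labs_ge x) (labs_geN x).
rewrite subrr in h.
have h2 : 0 <= (2 : R)^-1 by rewrite invr_ge0.
have := le_scale h2 h.
rewrite scaler0.
suff -> : (2^-1 : R) *: (labs join x + labs join x) = labs join x by [].
have -> : labs join x + labs join x = (2:R) *: labs join x by rewrite scaler_nat mulr2n.
by rewrite scalerA mulVf ?pnatr_eq0 // scale1r.
Qed.

Lemma labs_add x y : le (labs join (x + y)) (labs join x + labs join y).
Proof.
apply: join_lub; first exact: le_add (labs_ge x) (labs_ge y).
by rewrite opprD; apply: le_add (labs_geN x) (labs_geN y).
Qed.

Lemma labs_scale (a : R) x : le (labs join (a *: x)) (`|a| *: labs join x).
Proof.
have [a0|a0] := leP 0 a.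
  rewrite ger0_norm //; apply: join_lub.
    exact: le_scale (labs_ge x).
  by rewrite -scalerN; apply: le_scale (labs_geN x).
rewrite ltr0_norm //; apply: join_lub.
  have -> : a *: x = (- a) *: (- x) by rewrite scalerN scaleNr opprK.
  by apply: le_scale (labs_geN x); rewrite oppr_ge0 ltW.
by rewrite -scaleNr; apply: le_scale (labs_ge x); rewrite oppr_ge0 ltW.
Qed.

Lemma labs0 : labs join 0 = 0.
Proof.
apply: le_anti; last exact: labs_ge0.
by apply: join_lub; rewrite ?oppr0; apply: le_refl'.
Qed.

Lemma labs_pos x : le 0 x -> labs join x = x.
Proof.
move=> h; apply: le_anti; last exact: labs_ge.
apply: join_lub; first exact: le_refl'.
apply: le_tr (le_opp h) _; rewrite oppr0; exact: h.
Qed.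

Lemma le_scale_mono (a b : R) x : a <= b -> le 0 x -> le (a *: x) (b *: x).
Proof.
move=> ab x0; apply: le_0sub; rewrite -scalerBl.
have := @le_scale (b - a) _ _ _ x0; rewrite scaler0; apply; by rewrite subr_ge0.
Qed.

Lemma le_sum (I : Type) (s : seq I) (F G : I -> X) :
  (forall i, le (F i) (G i)) -> le (\sum_(i <- s) F i) (\sum_(i <- s) G i).
Proof.
move=> h; elim: s => [|i s IH]; first by rewrite !big_nil; apply: le_refl'.
by rewrite !big_cons; apply: le_add.
Qed.

Lemma labs_sum (I : Type) (s : seq I) (F : I -> X) :
  le (labs join (\sum_(i <- s) F i)) (\sum_(i <- s) labs join (F i)).
Proof.
elim: s => [|i s IH]; first by rewrite !big_nil labs0; apply: le_refl'.
rewrite !big_cons; apply: le_tr (labs_add _ _) _.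
by apply: le_add; [apply: le_refl' | exact: IH].
Qed.

Lemma supn_ge f k i : (i <= k)%N -> le (f i) (supn join f k).
Proof.
elim: k => [|k IH]; first by rewrite leqn0 => /eqP ->; apply: le_refl'.
rewrite leq_eqVlt => /orP [/eqP ->|]; first exact: le_joinr.
by rewrite ltnS => /IH h; apply: le_tr h (le_joinl _ _).
Qed.

Lemma supn_lub f k z : (forall i, (i <= k)%N -> le (f i) z) -> le (supn join f k) z.
Proof.
elim: k => [|k IH] h /=; first exact: h.
by apply: join_lub; [apply: IH => i ik; apply: h; apply: leq_trans ik _ | apply: h].
Qed.

Lemma supn_ext f g k : (forall i, (i <= k)%N -> f i = g i) -> supn join f k = supn join g k.
Proof.
elim: k => [|k IH] h /=; first exact: h.
by rewrite IH ?h // => i ik; apply: h; apply: leq_trans ik _.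
Qed.

Lemma supn_ge0 f k : (forall i, le 0 (f i)) -> le 0 (supn join f k).
Proof. by move=> h; apply: le_tr (h 0%N) (supn_ge _ (leq0n k)). Qed.

End Lat.


Section Abel.
Variables (R : realType) (X : completeNormedModType R).

Lemma abel_aux (S g T : X) (a b : R) :
  a *: S - T + a *: g = b *: (S + g) - (T + (b - a) *: (S + g)).
Proof.
rewrite scalerBl [T + _]addrC opprD addrA opprB.
rewrite [b *: _ + _]addrC subrK.
by rewrite scalerDr addrAC.
Qed.

Lemma abel_id (r : nat -> R) (g : nat -> X) i :
  \sum_(k < i) r k *: g k =
  r i *: (\sum_(k < i) g k) - \sum_(k < i) (r k.+1 - r k) *: (\sum_(l < k.+1) g l).
Proof.
elim: i => [|i IH]; first by rewrite !big_ord0 scaler0 subr0.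
rewrite !big_ord_recr /= IH; exact: abel_aux.
Qed.


Variables (le : X -> X -> Prop) (join : X -> X -> X).
Hypothesis HL : is_vector_lattice le join.

Lemma abel_lat (r : nat -> R) (g : nat -> X) (rho : R) (M : X) i :
  (forall k, 0 <= r k) -> (forall k, r k <= r k.+1) -> (forall k, r k <= rho) ->
  (forall j, (j <= i)%N -> le (labs join (\sum_(k < j) g k)) M) ->
  le (labs join (\sum_(k < i) r k *: g k)) ((2 * rho) *: M).
Proof.
move=> r0 rinc rle hM.
have M0 : le 0 M.
  have h := hM 0%N (leq0n _); exact: (le_tr HL (labs_ge0 HL _) h).
rewrite abel_id.
eapply (le_tr HL); first exact: labs_add HL _ _.
have h1 : le (labs join (r i *: \sum_(k < i) g k)) (r i *: M).
  eapply (le_tr HL); first exact: (labs_scale HL _ _).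
  by rewrite ger0_norm //; eapply (le_scale HL) => //; eapply hM.
have h2 : le (labs join (- \sum_(k < i) (r k.+1 - r k) *: (\sum_(l < k.+1) g l)))
             ((r i - r 0%N) *: M).
  rewrite -scaleN1r; eapply (le_tr HL); first exact: (labs_scale HL _ _).
  rewrite normrN normr1 scale1r.
  have hs := labs_sum HL (index_enum 'I_i) (fun k : 'I_i => (r k.+1 - r k) *: \sum_(l < k.+1) g l).
  eapply (le_tr HL); first exact: hs.
  have -> : (r i - r 0%N) *: M = \sum_(k < i) (r k.+1 - r k) *: M.
    rewrite -scaler_suml; congr (_ *: _).
    by rewrite -(big_mkord xpredT (fun k => r k.+1 - r k)) telescope_sumr.
  eapply (le_sum HL) => k.
  eapply (le_tr HL); first exact: (labs_scale HL _ _).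
  rewrite ger0_norm ?subr_ge0 //; eapply (le_scale HL); first by rewrite subr_ge0.
  by apply: hM; have := ltn_ord k.
eapply (le_tr HL); first exact: (le_add HL h1 h2).
rewrite -scalerDl; eapply (le_scale_mono HL) => //.
have := rle i; have := r0 0%N; have := r0 i; lra.
Qed.

Lemma abel_norm (r : nat -> R) (g : nat -> X) (rho Mn : R) i :
  (forall k, 0 <= r k) -> (forall k, r k <= r k.+1) -> (forall k, r k <= rho) ->
  (forall j, (j <= i)%N -> `|\sum_(k < j) g k| <= Mn) ->
  `|\sum_(k < i) r k *: g k| <= (2 * rho) * Mn.
Proof.
move=> r0 rinc rle hM.
have M0 : 0 <= Mn by apply: le_trans (hM 0%N (leq0n _)).
rewrite abel_id.
apply: le_trans (ler_normB _ _) _.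
rewrite normrZ ger0_norm //.
apply: le_trans (lerD (ler_wpM2l (r0 i) (hM i (leqnn i))) (ler_norm_sum _ _ _)) _.
have hs : \sum_(k < i) `|(r k.+1 - r k) *: (\sum_(l < k.+1) g l)| <=
   \sum_(k < i) (r k.+1 - r k) * Mn.
  apply: ler_sum => k _; rewrite normrZ ger0_norm ?subr_ge0 //.
  by apply: ler_wpM2l; rewrite ?subr_ge0 //; apply: hM; have := ltn_ord k.
apply: le_trans (lerD (lexx _) hs) _.
rewrite -mulr_suml.
rewrite -(big_mkord xpredT (fun k => r k.+1 - r k)) telescope_sumr //.
rewrite -mulrDl; apply: ler_wpM2r => //.
have := rle i; have := r0 0%N; have := r0 i; lra.
Qed.

End Abel.


Section Greedy.
Variables (R : realType) (X : completeNormedModType R).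
Variables (estar : nat -> X -> R).

Lemma gl_asym x a b : greedy_lt estar x a b -> greedy_lt estar x b a -> False.
Proof.
rewrite /greedy_lt => [[h|[h1 h2]]] [h'|[h3 h4]].
- by move: (lt_trans h h'); rewrite ltxx.
- by move: h; rewrite h3 ltxx.
- by move: h'; rewrite h1 ltxx.
- by move: (ltn_trans h2 h4); rewrite ltnn.
Qed.

Lemma ngo_mono x rho i j : natural_greedy_ordering estar x rho -> (i <= j)%N ->
  `|estar (rho j) x| <= `|estar (rho i) x|.
Proof.
case=> _ hlt _; rewrite leq_eqVlt => /orP [/eqP -> //|ij].
by case: (hlt _ _ ij) => [/ltW|[-> _]].
Qed.

Lemma prefix_ident x rho (s : seq nat) :
  natural_greedy_ordering estar x rho -> uniq s ->
  (forall n, n \in s -> estar n x != 0) ->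
  (forall j j', (j < j')%N -> (j' < size s)%N -> greedy_lt estar x (nth 0%N s j) (nth 0%N s j')) ->
  (forall n, n \notin s -> forall j, (j < size s)%N -> greedy_lt estar x (nth 0%N s j) n) ->
  forall j, (j < size s)%N -> rho j = nth 0%N s j.
Proof.
move=> [inj hlt cov] us hs hsort hout.
elim/ltn_ind => i IH ilt.
have [k hk] := cov _ (hs _ (mem_nth 0%N ilt)).
have [ki|ik|ki] := ltngtP k i; last by move: hk; rewrite ki.
- have := IH k ki (ltn_trans ki ilt); rewrite hk => /eqP.
  by rewrite nth_uniq ?(ltn_trans ki ilt) // => /eqP ki'; move: ki; rewrite ki' ltnn.
- have g1 := hlt _ _ ik; rewrite hk in g1.
  case: (boolP (rho i \in s)) => [ins|nins]; last first.
    by case: (gl_asym g1 (hout _ nins _ ilt)).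
  have lsz := ins; rewrite -index_mem in lsz.
  have el := nth_index 0%N ins.
  set l := index (rho i) s in lsz el.
  have [li|il|li] := ltngtP l i.
  + have := IH l li (ltn_trans li ilt); rewrite el => /inj li'.
    by move: li; rewrite -li' ltnn.
  + have := hsort _ _ il lsz; rewrite el => g2.
    by case: (gl_asym g1 g2).
  + by move: el; rewrite li => ->.
Qed.

Definition gle (d : nat -> R) : rel nat := fun n n' =>
  (`|d n'| < `|d n|) || ((`|d n| == `|d n'|) && (n <= n')%N).

Lemma gle_total d : total (gle d).
Proof.
move=> a b; rewrite /gle.
have [h|h|h] := ltgtP `|d a| `|d b|; rewrite ?h ?orbT //=.
exact: leq_total.

Qed.

Lemma gle_trans d : transitive (gle d).
Proof.
move=> b a c; rewrite /gle => /orP [h1|/andP [/eqP h1 h2]] /orP [h3|/andP [/eqP h3 h4]].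
- by rewrite (lt_trans h3 h1).
- by rewrite -h3 h1.
- by rewrite h1 h3.
- by rewrite h1 h3 eq_refl (leq_trans h2 h4) orbT.
Qed.

Definition srt (d : nat -> R) N := sort (gle d) (iota 0 N).
Definition rho_of (d : nat -> R) N (j : nat) : nat :=
  if (j < N)%N then nth 0%N (srt d N) j else j.

Lemma srt_size d N : size (srt d N) = N.
Proof. by rewrite size_sort size_iota. Qed.

Lemma srt_uniq d N : uniq (srt d N).
Proof. by rewrite sort_uniq iota_uniq. Qed.

Lemma mem_srt d N n : (n \in srt d N) = (n < N)%N.
Proof. by rewrite mem_sort mem_iota. Qed.

Lemma rho_lt d N j : (j < N)%N -> (rho_of d N j < N)%N.
Proof.
move=> jN; rewrite /rho_of jN -(mem_srt d); apply: mem_nth; by rewrite srt_size.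
Qed.

Lemma index_srt_lt d N n : (n < N)%N -> (index n (srt d N) < N)%N.
Proof. by move=> nN; rewrite -{2}(srt_size d N) index_mem mem_srt. Qed.

Lemma rho_index d N n : (n < N)%N -> rho_of d N (index n (srt d N)) = n.
Proof.
move=> nN; have ins : n \in srt d N by rewrite (mem_srt d).
by rewrite /rho_of index_srt_lt // nth_index.
Qed.



Lemma rho_sum (V : nmodType) d N (F : nat -> V) :
  \sum_(j < N) F (rho_of d N j) = \sum_(n < N) F n.
Proof.
have -> : \sum_(j < N) F (rho_of d N j) = \sum_(j < N) F (nth 0%N (srt d N) j).
  by apply: eq_bigr => j _; rewrite /rho_of ltn_ord.
rewrite -(big_mkord xpredT (fun j => F (nth 0%N (srt d N) j))).
rewrite -{1}(srt_size d N) -(big_nth 0%N xpredT F).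
rewrite -(big_mkord xpredT F) -{2}(subn0 N) -/(index_iota 0 N) /index_iota subn0.
rewrite subn0; apply: perm_big; rewrite /srt; apply/permPl; exact: perm_sort.
Qed.

Lemma greedy_exists x N : (forall n, (N <= n)%N -> estar n x = 0) ->
  natural_greedy_ordering estar x (rho_of (fun n => estar n x) N).
Proof.
move=> h0; set d := fun n => estar n x.
have sorted_s := sort_sorted (gle_total d) (iota 0 N).
have lt_in : forall i j, (i < j)%N -> (j < N)%N ->
    greedy_lt estar x (nth 0%N (srt d N) i) (nth 0%N (srt d N) j).
  move=> i j ij jN.
  have iN := ltn_trans ij jN.
  have hle := sorted_ltn_nth (@gle_trans d) 0%N sorted_s.
  have := hle i j; rewrite !inE -/(srt d N) srt_size => /(_ iN jN ij).
  have hne : nth 0%N (srt d N) i != nth 0%N (srt d N) j.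
    by rewrite nth_uniq ?srt_size ?srt_uniq // neq_ltn ij.
  rewrite /gle /greedy_lt => /orP [h|/andP [/eqP h1 h2]]; first by left.
  by right; split => //; rewrite ltn_neqAle hne.
split.
- move=> i j.
  rewrite /rho_of; case: ltnP => iN; case: ltnP => jN.
  + move/eqP; rewrite nth_uniq ?srt_size ?srt_uniq //; by move/eqP.
  + move=> e; have : (nth 0%N (srt d N) i < N)%N by rewrite -(mem_srt d) mem_nth ?srt_size.
    by rewrite e ltnNge jN.
  + move=> e; have : (nth 0%N (srt d N) j < N)%N by rewrite -(mem_srt d) mem_nth ?srt_size.
    by rewrite -e ltnNge iN.
  + done.
- move=> i j ij; rewrite /rho_of.
  case: (ltnP j N) => jN.
    by rewrite (ltn_trans ij jN); apply: lt_in.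
  have dj : estar j x = 0 by apply: h0.
  case: (ltnP i N) => iN.
    have rN : (nth 0%N (srt d N) i < N)%N by rewrite -(mem_srt d) mem_nth ?srt_size.
    rewrite /greedy_lt dj normr0.
    have [hz|hz] := eqVneq (estar (nth 0%N (srt d N) i) x) 0.
      by right; rewrite hz normr0; split => //; apply: leq_trans rN jN.
    by left; rewrite normr_gt0.
  by right; rewrite dj h0 //; split.
- move=> n hn.
  have nN : (n < N)%N.
    by rewrite ltnNge; apply/negP => /h0 hz; move: hn; rewrite hz eq_refl.
  by exists (index n (srt d N)); apply: rho_index.
Qed.

End Greedy.


Lemma cvg_evc (R : realType) (X : completeNormedModType R) (f : nat -> X) (y : X) N :
  (forall M, (N <= M)%N -> f M = y) -> f @ \oo --> y.
Proof.
move=> h; apply/cvgrPdist_lt => eps e0.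
by exists N => // M /= NM; rewrite h // subrr normr0.
Qed.

Lemma norm_mono (R : realType) (X : completeNormedModType R) le join (u v : X) :
  is_banach_lattice le join -> le 0 u -> le u v -> `|u| <= `|v|.
Proof.
move=> [HL Hn] u0 uv; apply: Hn.
have v0 : le 0 v by exact: (le_tr HL u0 uv).
by rewrite (labs_pos HL u0) (labs_pos HL v0).
Qed.

Lemma filter_take_prefix (P : pred nat) (A : seq nat) k :
  exists2 J, (J <= size (seq.filter P A))%N & seq.filter P (take k A) = take J (seq.filter P A).
Proof.
elim: A k => [|a A IH] k; first by exists 0%N; rewrite ?take0.
case: k => [|k]; first by exists 0%N; rewrite ?take0.
have [J hJ e] := IH k.
rewrite /= ; case: (P a) => /=.
  by exists J.+1; rewrite ?e.
by exists J.
Qed.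

Lemma sum_take_nth (V : nmodType) (s : seq nat) (F : nat -> V) J :
  (J <= size s)%N -> \sum_(n <- take J s) F n = \sum_(k < J) F (nth 0%N s k).
Proof.
move=> Js; rewrite (big_nth 0%N) size_take.
have -> : (if (J < size s)%N then J else size s) = J.
  by case: ltnP => // h; apply/eqP; rewrite eqn_leq Js h.
rewrite big_mkord; apply: eq_bigr => k _; by rewrite nth_take.
Qed.

Lemma sum_ind_list (R : realType) (V : lmodType R) (s : seq nat) N (F : nat -> V) :
  uniq s -> (forall n, n \in s -> (n < N)%N) ->
  \sum_(n < N) ((nat_of_ord n \in s)%:R : R) *: F n = \sum_(n <- s) F n.
Proof.
move=> us sN.
rewrite -(big_mkord xpredT (fun n => ((n \in s)%:R : R) *: F n)).
have -> : \sum_(0 <= n < N) ((n \in s)%:R : R) *: F n = \sum_(0 <= n < N | n \in s) F n.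
  by rewrite [RHS]big_mkcond /=; apply: eq_bigr => n _; case: (n \in s); rewrite ?scale1r ?scale0r.
rewrite -big_filter; apply: perm_big; apply: uniq_perm.
- by apply: filter_uniq; apply: iota_uniq.
- done.
- move=> n; rewrite mem_filter mem_iota add0n /=.
  by case ns: (n \in s) => //=; rewrite subn0 sN.
Qed.

Section Coef.
Variables (R : realType) (X : completeNormedModType R).
Variables (e : nat -> X) (estar : nat -> X -> R).
Hypothesis Hb : basic_with_functionals e estar.

Lemma clspan_fin (d : nat -> R) N : clspan e (\sum_(k < N) d k *: e k).
Proof. by apply: subset_closure; exists N, d. Qed.

Lemma coef_fin (d : nat -> R) N n :
  estar n (\sum_(k < N) d k *: e k) = if (n < N)%N then d n else 0.
Proof.
set y := \sum_(k < N) d k *: e k.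
have [_ uniq] := Hb (@clspan_fin d N).
symmetry; apply: (uniq (fun k => if (k < N)%N then d k else 0)).
apply: (cvg_evc (N := N)) => M NM.
rewrite -(big_mkord xpredT (fun k => (if (k < N)%N then d k else 0) *: e k)).
rewrite (big_cat_nat (leq0n N) NM) /=.
have -> : \sum_(N <= i < M) (if (i < N)%N then d i else 0) *: e i = 0.
  rewrite big_nat_cond big1 // => k /andP [/andP [Nk _] _].
  by rewrite ltnNge Nk scale0r.
rewrite addr0 big_mkord; apply: eq_bigr => k _; by rewrite ltn_ord.
Qed.

End Coef.


Section PieceC.
Variables (R : realType) (X : completeNormedModType R).
Variables (e : nat -> X) (estar : nat -> X -> R) (C : R).
Hypothesis Hqg : forall x rho m, clspan e x -> natural_greedy_ordering estar x rho ->
     `|greedy_sum e estar x rho m| <= C * `|x|.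

Lemma pieceC x N L a :
  clspan e x -> (forall n, (N <= n)%N -> estar n x = 0) -> 0 < a ->
  (forall j, (j < L)%N -> a <= `|estar (rho_of (fun n => estar n x) N j) x|) ->
  `|\sum_(j < L) (estar (rho_of (fun n => estar n x) N j) x /
                 `|estar (rho_of (fun n => estar n x) N j) x|) *:
                 e (rho_of (fun n => estar n x) N j)|
   <= (2 * a^-1) * (C * `|x|).
Proof.
move=> xs h0 a0 ha.
set rho := rho_of (fun n => estar n x) N.
have ngo : natural_greedy_ordering estar x rho by apply: greedy_exists.
set c := fun j => estar (rho j) x.
pose r k := if (k < L)%N then `|c k|^-1 else a^-1.
have cpos : forall k, (k < L)%N -> 0 < `|c k| by move=> k kL; apply: lt_le_trans a0 (ha k kL).
have -> : \sum_(j < L) (c j / `|c j|) *: e (rho j) = \sum_(j < L) r j *: (c j *: e (rho j)).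
  apply: eq_bigr => j _; rewrite scalerA /r ltn_ord mulrC //.
apply: (@abel_norm _ _ r (fun j => c j *: e (rho j)) a^-1 (C * `|x|) L).
- move=> k; rewrite /r; case: ifP => kL; by rewrite invr_ge0 ?normr_ge0 ?ltW.
- move=> k; rewrite /r; case: (ltnP k.+1 L) => k1L.
    rewrite (ltn_trans (ltnSn k) k1L).
    rewrite lef_pV2 ?posrE ?cpos //; last by apply: ltn_trans (ltnSn k) k1L.
    exact: ngo_mono ngo (leqnSn k).
  case: ltnP => kL //.
  by rewrite lef_pV2 ?posrE ?cpos //; apply: ha.
- move=> k; rewrite /r; case: ifP => kL //.
  by rewrite lef_pV2 ?posrE ?cpos //; apply: ha.
- by move=> j _; apply: Hqg.
Qed.

End PieceC.

Section PieceB.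
Variables (R : realType) (X : completeNormedModType R).
Variables (e : nat -> X) (estar : nat -> X -> R) (V : R).
Variables (le : X -> X -> Prop) (join : X -> X -> X).
Hypothesis Hb : basic_with_functionals e estar.
Hypothesis HBL : is_banach_lattice le join.
Hypothesis Hvqg : forall x rho m, clspan e x -> natural_greedy_ordering estar x rho -> (0 < m)%N ->
     `|greedy_vee join e estar x rho m| <= V * `|x|.
Hypothesis V0 : 0 <= V.

Lemma HL : is_vector_lattice le join. Proof. by case: HBL. Qed.

Lemma pieceB_delta (L : seq nat) N (sg : nat -> R) (A : seq nat) (P : pred nat) (d : R) :
  uniq L -> (forall n, n \in L -> (n < N)%N) -> (forall n, n \in L -> `|sg n| = 1) ->
  uniq A -> {subset A <= L} -> 0 < d ->
  `|supn join (fun i => labs join (\sum_(n <- take i.+1 A | P n) sg n *: e n)) (size A).-1|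
   <= 2 * V * (`|\sum_(n < N) ((nat_of_ord n \in L)%:R * sg n) *: e n| +
       d * `|\sum_(n < N) ((nat_of_ord n \in seq.filter P A)%:R * sg n *
                  (size (seq.filter P A) - index (nat_of_ord n) (seq.filter P A))%:R) *: e n|).
Proof.
move=> uL LN sg1 uA AL d0.
set s := seq.filter P A.
have us : uniq s by apply: filter_uniq.
have sA : {subset s <= A} by move=> n; rewrite mem_filter => /andP [].
have sL : forall n, n \in s -> n \in L by move=> n /sA /AL.
set oneL := \sum_(n < N) _.
set Y := \sum_(n < N) _.
pose cz n := (n \in L)%:R * sg n + d * ((n \in s)%:R * sg n * (size s - index n s)%:R).
set z := \sum_(n < N) cz n *: e n.
have hz : z = oneL + d *: Y.
  rewrite /z /oneL /Y scaler_sumr -big_split /=; apply: eq_bigr => n _.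
  by rewrite scalerA -scalerDl.
have ez : forall n, estar n z = if (n < N)%N then cz n else 0 by move=> n; rewrite /z (coef_fin Hb).
have ez0 : forall n, (N <= n)%N -> estar n z = 0 by move=> n Nn; rewrite ez ltnNge Nn.
have zcl : clspan e z by apply: clspan_fin.
set rho := rho_of (fun n => estar n z) N.
have ngo : natural_greedy_ordering estar z rho by apply: greedy_exists.
have ezs : forall n, n \in s -> estar n z = sg n * (1 + d * (size s - index n s)%:R).
  move=> n ns; rewrite ez LN ?sL // /cz ns (sL _ ns) /=; ring.
have aezs : forall n, n \in s -> `|estar n z| = 1 + d * (size s - index n s)%:R.
  move=> n ns; rewrite ezs // normrM sg1 ?sL // mul1r ger0_norm //.
  have hp : 0 <= d * (size s - index n s)%:R by rewrite mulr_ge0 ?ler0n ?ltW.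
  lra.
have aezn : forall n, n \notin s -> `|estar n z| <= 1.
  move=> n ns; rewrite ez; case: ifP => nN; last by rewrite normr0.
  rewrite /cz (negbTE ns) mul0r mul0r mulr0 addr0.
  case nL: (n \in L); last by rewrite mul0r normr0.
  by rewrite mul1r sg1.
have hrho : forall j, (j < size s)%N -> rho j = nth 0%N s j.
  apply: (prefix_ident ngo us).
  - move=> n ns; rewrite -normr_eq0 aezs //; apply: lt0r_neq0.
    have hp : 0 <= d * (size s - index n s)%:R by rewrite mulr_ge0 ?ler0n ?ltW.
    lra.
  - move=> j j' jj' j's; left.
    have js := ltn_trans jj' j's.
    rewrite !aezs ?mem_nth // !index_uniq //.
    rewrite ltrD2l ltr_pM2l // ltr_nat.
    by apply: ltn_sub2l.
  - move=> n ns j js; left.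
    apply: le_lt_trans (aezn _ ns) _.
    rewrite aezs ?mem_nth // index_uniq // ltrDl; apply: mulr_gt0 => //.
    by rewrite ltr0n subn_gt0.
pose g k := estar (nth 0%N s k) z *: e (nth 0%N s k).
set M := greedy_vee join e estar z rho (size s).+1.
have HL := HL.
have M0 : le 0 M by apply: (supn_ge0 HL) => k; exact: (labs_ge0 HL).
have hM : forall j, (j <= size s)%N -> le (labs join (\sum_(k < j) g k)) M.
  move=> j js.
  have -> : \sum_(k < j) g k = greedy_sum e estar z rho j.
    apply: eq_bigr => k _; rewrite /g hrho //; exact: leq_trans (ltn_ord k) js.
  case: j js => [|j] js.
    by rewrite /greedy_sum big_ord0 (labs0 HL).
  rewrite /M /greedy_vee /=.
  exact: (supn_ge HL (fun k => labs join (greedy_sum e estar z rho k.+1)) (ltnW js)).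
pose r k := if (k < size s)%N then (1 + d * (size s - k)%:R)^-1 else 1.
have hpos : forall k, 0 < 1 + d * (size s - k)%:R.
  move=> k; have hp : 0 <= d * (size s - k)%:R by rewrite mulr_ge0 ?ler0n ?ltW.
  lra.
have habel : forall J, (J <= size s)%N ->
    le (labs join (\sum_(n <- take J s) sg n *: e n)) ((2 * 1) *: M).
  move=> J Js.
  have -> : \sum_(n <- take J s) sg n *: e n = \sum_(k < J) r k *: g k.
    rewrite sum_take_nth //; apply: eq_bigr => k _.
    have ks : (k < size s)%N by apply: leq_trans (ltn_ord k) Js.
    rewrite /g /r ks scalerA ezs ?mem_nth // index_uniq //.
    congr (_ *: _); rewrite mulrC -mulrA mulrV ?mulr1 //.
    by rewrite unitfE; apply: lt0r_neq0.
  apply: (abel_lat HL) => //.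
  - move=> k; rewrite /r; case: ifP => _ //; by rewrite invr_ge0 ltW.
  - move=> k; rewrite /r; case: (ltnP k.+1 (size s)) => k1.
      rewrite (ltn_trans (ltnSn k) k1) lef_pV2 ?posrE //.
      rewrite lerD2l ler_pM2l // ler_nat.
      by apply: leq_sub2l.
    case: ifP => _ //; rewrite invr_le1 ?unitfE ?lt0r_neq0 //.
    have hp : 0 <= d * (size s - k)%:R by rewrite mulr_ge0 ?ler0n ?ltW.
    lra.
  - move=> k; rewrite /r; case: ifP => _ //; rewrite invr_le1 ?unitfE ?lt0r_neq0 //.
    have hp : 0 <= d * (size s - k)%:R by rewrite mulr_ge0 ?ler0n ?ltW.
    lra.
  - move=> j jJ; apply: hM; exact: leq_trans jJ Js.
have hVP : le (supn join (fun i => labs join (\sum_(n <- take i.+1 A | P n) sg n *: e n)) (size A).-1)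
              ((2 * 1) *: M).
  apply: (supn_lub HL) => i _.
  rewrite -big_filter.
  have [J Js ->] := filter_take_prefix P A i.+1.
  exact: habel.
have VP0 : le 0 (supn join (fun i => labs join (\sum_(n <- take i.+1 A | P n) sg n *: e n)) (size A).-1).
  by apply: (supn_ge0 HL) => k; exact: (labs_ge0 HL).
apply: le_trans (norm_mono HBL VP0 hVP) _.
rewrite normrZ mulr1 ger0_norm // -mulrA ler_pM2l //.
apply: le_trans (Hvqg zcl ngo (ltn0Sn _)) _.
apply: ler_wpM2l => //; rewrite hz.
apply: le_trans (ler_normD _ _) _; rewrite normrZ ger0_norm //; exact: ltW.
Qed.

Lemma pieceB (L : seq nat) N (sg : nat -> R) (A : seq nat) (P : pred nat) :
  uniq L -> (forall n, n \in L -> (n < N)%N) -> (forall n, n \in L -> `|sg n| = 1) ->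
  uniq A -> {subset A <= L} ->
  `|supn join (fun i => labs join (\sum_(n <- take i.+1 A | P n) sg n *: e n)) (size A).-1|
   <= 2 * V * `|\sum_(n < N) ((nat_of_ord n \in L)%:R * sg n) *: e n|.
Proof.
move=> uL LN sg1 uA AL.
apply/ler_addgt0Pr => eps e0.
pose Y := \sum_(n < N) ((nat_of_ord n \in seq.filter P A)%:R * sg n *
                  (size (seq.filter P A) - index (nat_of_ord n) (seq.filter P A))%:R) *: e n.
pose K := 2 * V * `|Y|.
have K0 : 0 <= K by rewrite mulr_ge0 ?mulr_ge0.
set d := eps / (K + 1).
have d0 : 0 < d by rewrite divr_gt0 //; lra.
have hd : d * (K + 1) = eps by rewrite /d mulfVK //; apply: lt0r_neq0; lra.
have hdK : d * K = eps - d by rewrite -hd; ring.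
apply: le_trans (pieceB_delta P uL LN sg1 uA AL d0) _.
rewrite -/Y mulrDr.
have -> : 2 * V * (d * `|Y|) = d * K by rewrite /K; ring.
lra.
Qed.

End PieceB.


Lemma min_pos_exists (R : realType) (A : seq nat) (c : nat -> R) :
  has (fun n => 0 < c n) A ->
  exists n0, [/\ n0 \in A, 0 < c n0 & forall n, n \in A -> 0 < c n -> c n0 <= c n].
Proof.
elim: A => [|a A IH] //= hh.
case: (boolP (has (fun n => 0 < c n) A)) => [hA|hno].
  have [n0 [n0A cn0 hmin]] := IH hA.
  case: (boolP (0 < c a)) => ca.
    case: (leP (c a) (c n0)) => h.
      exists a; split; rewrite ?mem_head //.
      move=> m; rewrite inE => /orP [/eqP -> //|mA cm]; exact: le_trans h (hmin m mA cm).
    exists n0; split; rewrite ?inE ?n0A ?orbT //.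
    move=> m; rewrite inE => /orP [/eqP -> _|mA cm]; [exact: ltW | exact: hmin].
  exists n0; split; rewrite ?inE ?n0A ?orbT //.
  move=> m; rewrite inE => /orP [/eqP -> cm|mA cm]; [by rewrite cm in ca | exact: hmin].
have ca : 0 < c a by move: hh; rewrite (negbTE hno) orbF.
exists a; split; rewrite ?mem_head //.
move=> m; rewrite inE => /orP [/eqP -> //|mA cm].
by move/hasPn: hno => /(_ m mA); rewrite cm.
Qed.

Lemma count_lt (p q : pred nat) (A : seq nat) n0 :
  (forall n, p n -> q n) -> n0 \in A -> q n0 -> ~~ p n0 ->
  (count p A < count q A)%N.
Proof.
elim: A => [|a A IH] //= hpq.
rewrite inE => /orP [/eqP ->|n0A] qn pn.
  rewrite qn (negbTE pn) /= add0n add1n ltnS.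
  by apply: sub_count => n; apply: hpq.
have := IH hpq n0A qn pn.
case pa: (p a); first by rewrite (hpq a pa).
case: (q a) => /=; rewrite ?add0n ?add1n // => h; exact: ltn_trans h (ltnSn _).
Qed.

Section Layer.
Variables (R : realType) (X : completeNormedModType R).
Variables (le : X -> X -> Prop) (join : X -> X -> X).
Hypothesis HBL : is_banach_lattice le join.
Variables (A : seq nat) (v : nat -> X) (M : R).
Hypothesis HM : forall P : pred nat,
  `|supn join (fun i => labs join (\sum_(n <- take i.+1 A | P n) v n)) (size A).-1| <= M.

Let HL : is_vector_lattice le join. Proof. by case: HBL. Qed.

Definition VC (c : nat -> R) :=
  supn join (fun i => labs join (\sum_(n <- take i.+1 A) c n *: v n)) (size A).-1.

Lemma VC_ge0 c : le 0 (VC c).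
Proof. by apply: (supn_ge0 HL) => k; exact: (labs_ge0 HL). Qed.

Lemma layer_triv (c : nat -> R) b : (forall n, n \in A -> c n = 0) -> 0 <= b ->
  `|VC c| <= b * M.
Proof.
move=> hc b0.
have M0 : 0 <= M by apply: le_trans (HM xpredT).
have -> : VC c = 0.
  apply: (le_anti HL); last exact: VC_ge0.
  apply: (supn_lub HL) => i _.
  rewrite big_seq big1 ?(labs0 HL); first exact: (le_refl' HL).
  by move=> n /mem_take nA; rewrite hc // scale0r.
by rewrite normr0 mulr_ge0.
Qed.

Lemma layer k : forall (c : nat -> R) b, (count (fun n => (0 < c n)%R) A <= k)%N ->
  (forall n, n \in A -> 0 <= c n <= b) -> 0 <= b -> `|VC c| <= b * M.
Proof.
elim: k => [|k IH] c b hk hcb b0.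
  apply: layer_triv => // n nA.
  have /andP [c0 _] := hcb n nA.
  move: hk; rewrite leqn0 => /eqP hc0.
  have hno : ~~ has (fun n => (0 < c n)%R) A by rewrite has_count hc0.
  by apply/eqP; rewrite eq_le c0 andbT leNgt; apply/negP => cn; move/hasPn: hno => /(_ n nA); rewrite cn.
case: (boolP (has (fun n => 0 < c n) A)) => [hh|hno]; last first.
  apply: layer_triv => // n nA.
  have /andP [c0 _] := hcb n nA.
  by apply/eqP; rewrite eq_le c0 andbT leNgt; apply/negP => cn; move/hasPn: hno => /(_ n nA); rewrite cn.
have [n0 [n0A t0 hmin]] := min_pos_exists hh.
set t := c n0.
pose P := fun n => 0 < c n.
pose c' n := if 0 < c n then c n - t else 0.
have hcnt : (count (fun n => (0 < c' n)%R) A <= k)%N.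
  rewrite -ltnS; apply: leq_trans hk.
  apply: (count_lt (n0 := n0)) => //.
  - by move=> n; rewrite /c'; case: ifP => // _; rewrite ltxx.
  - by rewrite /c' t0 subrr ltxx.
have hcb' : forall n, n \in A -> 0 <= c' n <= b - t.
  move=> n nA; rewrite /c'; case: ifP => cn.
    have := hmin n nA cn; have /andP [_ hb] := hcb n nA; rewrite /t; lra.
  have /andP [_ hb] := hcb n0 n0A; rewrite lexx /=; rewrite /t; lra.
have tb : t <= b by have /andP [_ hb] := hcb n0 n0A.
have IHc := IH c' (b - t) hcnt hcb' (ltac:(lra)).
have hdec : forall i, \sum_(n <- take i.+1 A) c n *: v n =
    t *: \sum_(n <- take i.+1 A | P n) v n + \sum_(n <- take i.+1 A) c' n *: v n.
  move=> i; have -> : \sum_(n <- take i.+1 A | P n) v n = \sum_(n <- take i.+1 A) (if P n then v n else 0) by rewrite big_mkcond.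
  rewrite scaler_sumr -big_split /=.
  apply: eq_big_seq => n /mem_take nA.
  rewrite /c' /P; case: ifP => cn.
    by rewrite -scalerDl; congr (_ *: _); ring.
  have /andP [c0 _] := hcb n nA.
  have -> : c n = 0 by apply/eqP; rewrite eq_le c0 andbT leNgt cn.
  by rewrite scaler0 scale0r addr0.
set VP := supn join (fun i => labs join (\sum_(n <- take i.+1 A | P n) v n)) (size A).-1.
have VP0 : le 0 VP by apply: (supn_ge0 HL) => j; exact: (labs_ge0 HL).
have hle : le (VC c) (t *: VP + VC c').
  apply: (supn_lub HL) => i ik.
  rewrite hdec.
  eapply (le_tr HL); first exact: (labs_add HL _ _).
  apply: (le_add HL).
    eapply (le_tr HL); first exact: (labs_scale HL _ _).
    rewrite ger0_norm; last exact: ltW.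
    apply: (le_scale HL); first exact: ltW.
    exact: (supn_ge HL (fun i => labs join (\sum_(n <- take i.+1 A | P n) v n)) ik).
  exact: (supn_ge HL (fun i => labs join (\sum_(n <- take i.+1 A) c' n *: v n)) ik).
apply: le_trans (norm_mono HBL (VC_ge0 c) hle) _.
apply: le_trans (ler_normD _ _) _.
rewrite normrZ ger0_norm; last exact: ltW.
have := HM P; rewrite -/VP => hP.
have : t * `|VP| <= t * M by rewrite ler_pM2l.
move: IHc; rewrite mulrBl; lra.
Qed.
End Layer.


Lemma bigmax_ge (R : realType) (s : seq nat) (idx : R) (F : nat -> R) n :
  n \in s -> F n <= \big[Num.max/idx]_(m <- s) F m.
Proof.
elim: s => [|a s IH] //; rewrite inE big_cons => /orP [/eqP ->|ns].
  by rewrite le_max lexx.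
by rewrite le_max (IH ns) orbT.
Qed.

Lemma bigmin_le (R : realType) (s : seq nat) (idx : R) (F : nat -> R) n :
  n \in s -> \big[Num.min/idx]_(m <- s) F m <= F n.
Proof.
elim: s => [|a s IH] //; rewrite inE big_cons => /orP [/eqP ->|ns].
  by rewrite ge_min lexx.
by rewrite ge_min (IH ns) orbT.
Qed.

Lemma bigmin_gt0 (R : realType) (s : seq nat) (idx : R) (F : nat -> R) :
  0 < idx -> (forall n, n \in s -> 0 < F n) -> 0 < \big[Num.min/idx]_(m <- s) F m.
Proof.
move=> i0 h; rewrite big_seq; apply: (big_ind (fun r => 0 < r)) => //.
by move=> a b a0 b0; rewrite lt_min a0 b0.
Qed.

Lemma argmax_exists (A : seq nat) (f : nat -> nat) : A != [::] ->
  exists2 m, m \in A & forall n, n \in A -> (f n <= f m)%N.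
Proof.
elim: A => [|a A IH] // _.
case: (eqVneq A [::]) => [->|hA].
  by exists a; rewrite ?mem_head // => n; rewrite inE => /eqP ->.
have [m mA hm] := IH hA.
case: (leqP (f a) (f m)) => h.
  exists m; rewrite ?inE ?mA ?orbT // => n; rewrite inE => /orP [/eqP -> //|]; exact: hm.
exists a; rewrite ?mem_head // => n; rewrite inE => /orP [/eqP -> //|nA].
exact: leq_trans (hm n nA) (ltnW h).
Qed.

Lemma bound_exists (A : seq nat) : exists N0, forall n, n \in A -> (n < N0)%N.
Proof.
elim: A => [|a A [N0 h]]; first by exists 0%N.
exists (maxn a.+1 N0) => n; rewrite inE => /orP [/eqP ->|nA].
  by rewrite leq_max leqnn.
by rewrite leq_max (h n nA) orbT.
Qed.

Section Main.
Variables (R : realType) (X : completeNormedModType R).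
Variables (le : X -> X -> Prop) (join : X -> X -> X).
Variables (e : nat -> X) (estar : nat -> X -> R) (Cqg Cvqg : R).
Hypothesis HBL : is_banach_lattice le join.
Hypothesis Hb : basic_with_functionals e estar.
Hypothesis Hqg : forall x rho m, clspan e x -> natural_greedy_ordering estar x rho ->
     `|greedy_sum e estar x rho m| <= Cqg * `|x|.
Hypothesis Hvqg : forall x rho m, clspan e x -> natural_greedy_ordering estar x rho -> (0 < m)%N ->
     `|greedy_vee join e estar x rho m| <= Cvqg * `|x|.

Lemma estar0 n : estar n 0 = 0.
Proof.
have := coef_fin Hb (fun _ => 0) 1%N n.
have -> : \sum_(k < 1) (fun _ : nat => (0 : R)) k *: e k = 0 by rewrite big1 // => k _; rewrite scale0r.
by move=> ->; case: ifP.
Qed.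

Lemma consts_fin y N n0 :
  clspan e y -> (forall n, (N <= n)%N -> estar n y = 0) ->
  y = \sum_(n < N) estar n y *: e n -> estar n0 y != 0 ->
  1 <= Cqg /\ 0 <= Cvqg.
Proof.
move=> ycl h0 hy hn0.
have y0 : 0 < `|y|.
  rewrite normr_gt0; apply/negP => /eqP y0; move: hn0; by rewrite y0 estar0 eq_refl.
have ngo := greedy_exists h0.
split.
  have := Hqg N ycl ngo.
  have -> : greedy_sum e estar y (rho_of (fun n => estar n y) N) N = y.
    rewrite /greedy_sum (rho_sum (fun n => estar n y) N (fun n => estar n y *: e n)).
    by rewrite -hy.
  by rewrite -[X in X <= _]mul1r ler_pM2r.
have := Hvqg ycl ngo (ltn0Sn 0).
move/(le_trans (normr_ge0 _)); rewrite pmulr_lge0 //.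
Qed.

Lemma main_fin x N (A : seq nat) :
  clspan e x -> (forall n, (N <= n)%N -> estar n x = 0) ->
  x = \sum_(n < N) estar n x *: e n ->
  A != [::] -> uniq A -> {subset A <= [pred n | estar n x != 0]} ->
  `|proj_vee join e estar A x|
      <= 8 * Cqg ^+ 2 * Cvqg * (coef_max estar A x / coef_min estar A x) * `|x|.
Proof.
move=> xcl h0 hx An0 uA Asupp.
have HL : is_vector_lattice le join by case: HBL.
set d := fun n => estar n x.
have hA0 : head 0%N A \in A by rewrite -nth0 mem_nth // lt0n size_eq0.
have [C1 V0] := consts_fin xcl h0 hx (Asupp _ hA0).
set a := coef_min estar A x.
set b := coef_max estar A x.
have dA : forall n, n \in A -> 0 < `|d n| by move=> n /Asupp; rewrite inE normr_gt0.
have a0 : 0 < a by apply: bigmin_gt0 => //; apply: dA.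
have ha : forall n, n \in A -> a <= `|d n| by move=> n nA; exact: bigmin_le.
have hb : forall n, n \in A -> `|d n| <= b by move=> n nA; exact: bigmax_ge.
have AN : forall n, n \in A -> (n < N)%N.
  move=> n nA; rewrite ltnNge; apply/negP => /h0 hz.
  by have := Asupp _ nA; rewrite inE hz eq_refl.
set srtx := srt d N.
set rho := rho_of d N.
have ngo : natural_greedy_ordering estar x rho by apply: greedy_exists.
have [ms msA hms] := argmax_exists (fun n => index n srtx) An0.
set L := (index ms srtx).+1.
have LN : (L <= N)%N by apply: index_srt_lt; apply: AN.
have hrhoL : forall j, (j < L)%N -> rho j = nth 0%N srtx j.
  by move=> j jL; rewrite /rho /rho_of (leq_trans jL LN).
have hams : forall j, (j < L)%N -> a <= `|estar (rho j) x|.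
  move=> j jL; apply: le_trans (ha _ msA) _.
  have jm : (j <= index ms srtx)%N by rewrite -ltnS.
  have := ngo_mono ngo jm; rewrite /rho rho_index ?AN //.
set Lam := take L srtx.
have uLam : uniq Lam by apply: take_uniq; apply: srt_uniq.
have LamN : forall n, n \in Lam -> (n < N)%N.
  by move=> n /mem_take; rewrite (mem_srt d).
have ALam : {subset A <= Lam}.
  move=> n nA.
  have iL : (index n srtx < L)%N by rewrite ltnS; apply: hms.
  have nN := AN n nA.
  rewrite -(nth_index 0%N (_ : n \in srtx)); last by rewrite (mem_srt d).
  rewrite -(nth_take 0%N iL); apply: mem_nth.
  rewrite size_take srt_size; case: ifP => _ //; exact: leq_trans iL LN.
set sg := fun n => d n / `|d n|.
have hLam : forall n, n \in Lam -> a <= `|d n|.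
  move=> n nL; set j := index n Lam.
  have jL : (j < L)%N.
    have hsz : (size Lam <= L)%N.
      by rewrite size_take; case: ifP => // /negbT; rewrite -leqNgt.
    by apply: leq_trans hsz; rewrite index_mem.
  have : nth 0%N Lam j = n by apply: nth_index.
  rewrite nth_take // -hrhoL // => <-; exact: hams.
have sg1 : forall n, n \in Lam -> `|sg n| = 1.
  move=> n nL; have dn : 0 < `|d n| by apply: lt_le_trans a0 (hLam n nL).
  by rewrite /sg normrM normfV normr_id mulfV // lt0r_neq0.
have hone : \sum_(n < N) ((nat_of_ord n \in Lam)%:R * sg n) *: e n =
    \sum_(j < L) (estar (rho_of (fun n => estar n x) N j) x /
                 `|estar (rho_of (fun n => estar n x) N j) x|) *:
                 e (rho_of (fun n => estar n x) N j).
  have -> : \sum_(n < N) ((nat_of_ord n \in Lam)%:R * sg n) *: e n =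
     \sum_(n < N) ((nat_of_ord n \in Lam)%:R : R) *: (sg n *: e n).
    by apply: eq_bigr => n _; rewrite scalerA.
  rewrite (@sum_ind_list R X Lam N (fun n => sg n *: e n) uLam LamN) /Lam sum_take_nth ?srt_size //.
  by apply: eq_bigr => j _; rewrite -hrhoL.
have hC := pieceC Hqg xcl h0 a0 hams.
rewrite -hone in hC.
have hB := fun P => pieceB Hb HBL Hvqg V0 P uLam LamN sg1 uA ALam.
set M := 2 * Cvqg * ((2 * a^-1) * (Cqg * `|x|)).
have HM : forall P : pred nat,
  `|supn join (fun i => labs join (\sum_(n <- take i.+1 A | P n) sg n *: e n)) (size A).-1| <= M.
  move=> P; apply: le_trans (hB P) _.
  by rewrite /M; apply: ler_wpM2l => //; rewrite mulr_ge0.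
have b0 : 0 <= b by apply: le_trans (normr_ge0 _) (hb _ hA0).
have hlay := layer HBL HM (count_size (fun n => (0 < `|d n|)%R) A)
   (b := b) (fun n nA => (introT andP (conj (normr_ge0 _) (hb n nA)))) b0.
have -> : proj_vee join e estar A x =
   VC join A (fun n => sg n *: e n) (fun n => `|d n|).
  rewrite /proj_vee /VC; apply: supn_ext => i ip.
  have iA : (i.+1 <= size A)%N.
    have sA : (0 < size A)%N by rewrite lt0n size_eq0.
    by rewrite -(prednK sA) ltnS.
  rewrite sum_take_nth //; congr (labs join _); apply: eq_bigr => k _.
  have kA : (nth 0%N A k \in A) by apply: mem_nth; apply: leq_trans (ltn_ord k) iA.
  rewrite scalerA /sg mulrC -mulrA mulVf ?mulr1 //.
  by apply: lt0r_neq0; apply: dA.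
apply: le_trans hlay _.
rewrite /M.
have hQ : 0 <= Cvqg * b * a^-1 * `|x| by rewrite !mulr_ge0 // invr_ge0 ltW.
have -> : b * (2 * Cvqg * (2 * a^-1 * (Cqg * `|x|))) = 4 * Cqg * (Cvqg * b * a^-1 * `|x|) by ring.
have -> : 8 * Cqg ^+ 2 * Cvqg * (b / a) * `|x| = 8 * Cqg ^+ 2 * (Cvqg * b * a^-1 * `|x|) by ring.
set Q := Cvqg * b * a^-1 * `|x|.
have h1 : 0 <= 4 * Cqg * Q * (2 * Cqg - 1).
  apply: mulr_ge0; last lra.
  apply: mulr_ge0 => //; apply: mulr_ge0 => //; lra.
rewrite -subr_ge0; have -> : 8 * Cqg ^+ 2 * Q - 4 * Cqg * Q = 4 * Cqg * Q * (2 * Cqg - 1) by ring.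
exact: h1.
Qed.
End Main.


Unset Implicit Arguments.

Theorem corollary3p24 (R : realType) (X : completeNormedModType R)
  (le : X -> X -> Prop) (join : X -> X -> X)
  (e : nat -> X) (estar : nat -> X -> R) (Cqg Cvqg : R) :
  is_banach_lattice le join ->
  semi_normalized e ->
  basic_with_functionals e estar ->
  (* C_qg bounds the greedy sums *)
  (forall x rho m, clspan e x -> natural_greedy_ordering estar x rho ->
     `|greedy_sum e estar x rho m| <= Cqg * `|x|) ->
  (* uniformly quasi-greedy with constant C^vee_qg *)
  (forall x rho m, clspan e x -> natural_greedy_ordering estar x rho -> (0 < m)%N ->
     `|greedy_vee join e estar x rho m| <= Cvqg * `|x|) ->
  forall (x : X) (A : seq nat),
    clspan e x -> A != [::] -> uniq A -> {subset A <= [pred n | estar n x != 0]} ->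
    `|proj_vee join e estar A x|
      <= 8 * Cqg ^+ 2 * Cvqg * (coef_max estar A x / coef_min estar A x) * `|x|.
Proof.
move=> HBL _ Hb Hqg Hvqg x A xcl An0 uA Asupp.
have [N0 hN0] := bound_exists A.
pose y N := \sum_(n < N) estar n x *: e n.
have ey : forall N n, estar n (y N) = if (n < N)%N then estar n x else 0.
  by move=> N n; rewrite /y (coef_fin Hb (fun k => estar k x)).
have hA0 : head 0%N A \in A by rewrite -nth0 mem_nth // lt0n size_eq0.
have sA : (0 < size A)%N by rewrite lt0n size_eq0.
set K := 8 * Cqg ^+ 2 * Cvqg * (coef_max estar A x / coef_min estar A x).
have hy : forall N, (N0 <= N)%N -> `|proj_vee join e estar A x| <= K * `|y N|.
  move=> N NN.
  have AN : forall n, n \in A -> (n < N)%N by move=> n nA; apply: leq_trans (hN0 n nA) NN.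
  have eyA : forall n, n \in A -> estar n (y N) = estar n x by move=> n nA; rewrite ey AN.
  have ycl : clspan e (y N) by exact: (@clspan_fin R X e (fun k => estar k x) N).
  have y0 : forall n, (N <= n)%N -> estar n (y N) = 0 by move=> n Nn; rewrite ey ltnNge Nn.
  have yrep : y N = \sum_(n < N) estar n (y N) *: e n.
    by rewrite {1}/y; apply: eq_bigr => n _; rewrite ey ltn_ord.
  have ysupp : {subset A <= [pred n | estar n (y N) != 0]}.
    by move=> n nA; rewrite inE eyA //; exact: Asupp.
  have := main_fin HBL Hb Hqg Hvqg ycl y0 yrep An0 uA ysupp.
  have -> : proj_vee join e estar A (y N) = proj_vee join e estar A x.
    rewrite /proj_vee; apply: supn_ext => i ip; congr (labs join _).
    apply: eq_bigr => k _; rewrite eyA //; apply: mem_nth.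
    apply: leq_trans (ltn_ord k) _; by rewrite -(prednK sA) ltnS.
  have -> : coef_max estar A (y N) = coef_max estar A x.
    rewrite /coef_max eyA //; apply: eq_big_seq => n nA; by rewrite eyA.
  have -> : coef_min estar A (y N) = coef_min estar A x.
    rewrite /coef_min eyA //; apply: eq_big_seq => n nA; by rewrite eyA.
  done.
have K0 : 0 <= K.
  have ycl : clspan e (y N0) by exact: (@clspan_fin R X e (fun k => estar k x) N0).
  have y0 : forall n, (N0 <= n)%N -> estar n (y N0) = 0 by move=> n Nn; rewrite ey ltnNge Nn.
  have yrep : y N0 = \sum_(n < N0) estar n (y N0) *: e n.
    by rewrite {1}/y; apply: eq_bigr => n _; rewrite ey ltn_ord.
  have ynz : estar (head 0%N A) (y N0) != 0 by rewrite ey hN0 //; exact: Asupp.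
  have [C1 V0] := consts_fin Hb Hqg Hvqg ycl y0 yrep ynz.
  have dA : forall n, n \in A -> 0 < `|estar n x| by move=> n /Asupp; rewrite inE normr_gt0.
  have a0 : 0 < coef_min estar A x by apply: bigmin_gt0 => //; apply: dA.
  have b0 : 0 <= coef_max estar A x by apply: le_trans (normr_ge0 _) (bigmax_ge _ _ hA0).
  have c0 : 0 <= Cqg by lra.
  have a0w : 0 <= coef_min estar A x by exact: ltW.
  by rewrite /K !mulr_ge0 ?exprn_ge0 ?invr_ge0.
have [_ _] := Hb x xcl.
have hcv := (Hb x xcl).1.
apply/ler_addgt0Pr => eps e0.
have K1 : 0 < K + 1 by exact: ltr_wpDl K0 ltr01.
have ep : 0 < eps / (K + 1) by rewrite divr_gt0.
have [N1 _ hN1] := (cvgrPdist_lt _ _).1 hcv _ ep.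
set N := maxn N0 N1.
have hd : `|x - y N| < eps / (K + 1) by apply: hN1; rewrite /= leq_maxr.
apply: le_trans (hy N (leq_maxl _ _)) _.
have hyN : `|y N| <= `|x| + eps / (K + 1).
  have -> : y N = x - (x - y N) by rewrite opprB addrC subrK.
  apply: le_trans (ler_normB _ _) _; exact: lerD (lexx _) (ltW hd).
apply: le_trans (ler_wpM2l K0 hyN) _.
rewrite mulrDr lerD2l.
have -> : K * (eps / (K + 1)) = eps - eps / (K + 1).
  by field; apply: lt0r_neq0.
by rewrite lerBlDr lerDl ltW.
Qed.
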